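(* Every cactus graph of girth at least $4$ is $(2,1)$-colorable.
   Context: A cactus graph is a graph in which every $2$-connected component (block) is either a cycle or a single edge $K_2$. The girth is the length of a shortest cycle (infinite if acyclic). A set of vertices $X$ is $2$-independent if any two distinct vertices of $X$ are at distance at least $3$. A graph is $(a,b)$-colorable if its vertex set can be partitioned into $a$ independent sets and $b$ $2$-independent sets (some parts may be empty). *)

(* Defs.v *)
From mathcomp Require Import all_boot.
Set Implicit Arguments. Unset Strict Implicit. Unset Printing Implicit Defensive.

Section Graphs.
Variables (T : finType) (e : rel T).

Definition simple_graph : Prop := symmetric e /\ irreflexive e.

Definition induced_rel (S : {set T}) : rel T :=
  fun x y => [&& x \in S, y \in S & e x y].

Definition connected_on (S : {set T}) : Prop :=
  S != set0 /\ forall x y, x \in S -> y \in S -> connect (induced_rel S) x y.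

Definition nonseparable_on (S : {set T}) : Prop :=
  connected_on S /\
  forall v, v \in S -> forall x y, x \in S :\ v -> y \in S :\ v ->
    connect (induced_rel (S :\ v)) x y.

Definition is_block (S : {set T}) : Prop :=
  1 < #|S| /\ nonseparable_on S /\
  forall S' : {set T}, S \subset S' -> 1 < #|S'| -> nonseparable_on S' -> S' = S.

Definition is_K2_on (S : {set T}) : Prop :=
  exists x y, x != y /\ S = [set x; y] /\ e x y.

Definition is_cycle_on (S : {set T}) : Prop :=
  exists s : seq T, [/\ uniq s, 3 <= size s, S = [set x in s] &
    forall x y, x \in S -> y \in S ->
      e x y = (y == next s x) || (x == next s y)].

Definition cactus : Prop :=
  forall S, is_block S -> is_K2_on S \/ is_cycle_on S.

(* girth >= 4 : no cycle of length 3 (no cycles of length < 3 exist in a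
   simple graph) *)
Definition girth_ge4 : Prop :=
  forall x y z, e x y -> e y z -> e z x -> False.

Definition independent (X : {set T}) : Prop :=
  forall x y, x \in X -> y \in X -> ~~ e x y.

(* any two distinct vertices at distance >= 3 (possibly infinite) *)
Definition two_independent (X : {set T}) : Prop :=
  forall x y, x \in X -> y \in X -> x != y ->
    ~~ e x y /\ forall z, ~~ (e x z && e z y).

(* partition into a independent sets and b 2-independent sets:
   colour classes f^-1(i) for i < a independent, the others 2-independent *)
Definition ab_colorable (a b : nat) : Prop :=
  exists f : T -> 'I_(a + b),
    forall i : 'I_(a + b),
      if i < a then independent [set x | f x == i]
      else two_independent [set x | f x == i].

End Graphs.

(* Main.v *)
Require Import Defs.
From mathcomp Require Import all_boot zify.
From Stdlib Require Import Classical.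
Set Implicit Arguments. Unset Strict Implicit. Unset Printing Implicit Defensive.

Lemma index_next (T : eqType) (s : seq T) x : uniq s -> x \in s ->
  index (next s x) s = (index x s).+1 %% size s.
Proof.
case: s => [//|y s'] Hu Hx.
rewrite next_nth Hx.
have Hi : index x (y :: s') < size (y :: s') by rewrite index_mem.
move: Hi; set i := index x (y :: s') => Hi.
case: (boolP (i < size s')) => Hlt.
- have -> : nth y s' i = nth y (y :: s') i.+1 by [].
  have Hs : i.+1 < size (y :: s') by rewrite /=; lia.
  rewrite (index_uniq y Hs Hu).
  rewrite modn_small //.
- rewrite -leqNgt in Hlt.
  rewrite nth_default // /= eqxx.
  have -> : i.+1 = (size s').+1 by simpl in Hi; lia.
  by rewrite modnn.
Qed.

Definition good (T : finType) (e : rel T) (S : {set T}) (f : T -> nat) : Prop :=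
  [/\ forall x, x \in S -> f x <= 2,
      forall x y, x \in S -> y \in S -> e x y -> f x = f y -> False &
      forall x y z, x \in S -> y \in S -> z \in S -> f x = 2 -> f y = 2 ->
        x != y -> e x z -> e z y -> False].

Definition T0 (T : finType) (e : rel T) (S : {set T}) r :=
  exists f, good e S f /\ f r = 2.
Definition T2 (T : finType) (e : rel T) (S : {set T}) r :=
  exists f, good e S f /\ f r < 2 /\ forall z, z \in S -> e r z -> f z < 2.

Definition pos (T : eqType) (s : seq T) r x :=
  (index x s + (size s - index r s)) %% size s.

Section Pos.
Variables (T : eqType) (s : seq T) (r : T).
Hypotheses (Hu : uniq s) (Hr : r \in s).

Lemma size_gt0 : 0 < size s.
Proof. by case: s Hr. Qed.

Lemma pos_lt x : pos s r x < size s.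
Proof. by rewrite /pos ltn_mod size_gt0. Qed.

Lemma pos_r : pos s r r = 0.
Proof.
have := index_mem r s; rewrite Hr => H.
rewrite /pos subnKC ?modnn //; lia.
Qed.

Lemma pos_next x : x \in s -> pos s r (next s x) = (pos s r x).+1 %% size s.
Proof.
move=> Hx; rewrite /pos index_next //.
set a := index x s; set b := size s - _; rewrite -(addn1 ((a + b) %% _)) modnDml. rewrite modnDml addn1 addSn; done.
Qed.

Lemma pos_inj x y : x \in s -> y \in s -> pos s r x = pos s r y -> x = y.
Proof.
move=> Hx Hy /eqP; rewrite /pos -/(_ = _ %[mod _]) eqn_modDr.
rewrite !modn_small ?index_mem // => /eqP H.
by rewrite -(nth_index x Hx) -(nth_index x Hy) H.
Qed.
End Pos.
Definition g5 a := if a == 2 then 2 else if a < 2 then a else a.+1 %% 2.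
Lemma g5_2 a : g5 a = 2 -> a = 2.
Proof. rewrite /g5; case: eqP => // _; case: ifP => H; lia. Qed.
Lemma g5_lt a : a <> 2 -> g5 a < 2.
Proof. rewrite /g5; case: eqP => // _; case: ifP => H; lia. Qed.
Lemma g5_adj n a b : n %% 2 = 1 -> 5 <= n -> a <> 2 -> b <> 2 ->
  (b = a.+1 \/ (a.+1 = n /\ b = 0)) -> g5 a <> g5 b.
Proof.
move=> Hn H5 Ha Hb Hc; rewrite /g5.
case: eqP => // _; case: eqP => // _.
case: ifP => H1; case: ifP => H2; lia.
Qed.

Lemma succ_mod a n : a < n ->
  (a.+1 %% n = a.+1 /\ a.+1 < n) \/ (a.+1 = n /\ a.+1 %% n = 0).
Proof.
move=> H; case: (ltngtP a.+1 n) => H1.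
- by left; rewrite modn_small.
- lia.
- by right; rewrite H1 modnn.
Qed.

Lemma cycle_col (T : finType) (e : rel T) (B : {set T}) r :
  simple_graph e -> girth_ge4 e -> is_cycle_on e B -> r \in B ->
  T0 e B r /\ T2 e B r.
Proof.
move=> [Hsym Hirr] Hg [s [Hu Hn HB Hadj]] HrB.
have Hr : r \in s by move: HrB; rewrite HB inE.
have memB : forall x, (x \in B) = (x \in s) by move=> x; rewrite HB inE.
set n := size s in Hn.
set p := pos s r.
have plt : forall x, p x < n := pos_lt Hr.
have pr : p r = 0 := pos_r Hu Hr.
have pinj : forall x y, x \in B -> y \in B -> p x = p y -> x = y.
  by move=> x y; rewrite !memB; apply: pos_inj.
have pnext : forall x, x \in B -> p (next s x) = (p x).+1 %% n.
  by move=> x; rewrite memB; apply: pos_next.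
have edge : forall x y, x \in B -> y \in B -> e x y ->
   [\/ p y = (p x).+1, p x = (p y).+1, (p x).+1 = n /\ p y = 0 |
       (p y).+1 = n /\ p x = 0].
  move=> x y Hx Hy; rewrite Hadj // => /orP[]/eqP ->.
  - rewrite pnext //; case: (succ_mod (plt x)) => [][-> H]; by constructor.
  - rewrite pnext //; case: (succ_mod (plt y)) => [][-> H]; by constructor.
have nn3 : n <> 3.
  move=> H3.
  have Hy : next s r \in B by rewrite memB mem_next.
  have Hz : next s (next s r) \in B by rewrite memB !mem_next.
  apply: (Hg r (next s r) (next s (next s r))).
  - by rewrite Hadj // eqxx.
  - by rewrite Hadj // eqxx.
  - rewrite Hadj // ; apply/orP; left; apply/eqP; apply: pinj => //.
    by rewrite memB !mem_next.
    by rewrite !pnext // ?memB ?mem_next // pr H3.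
split.
- exists (fun x => if x == r then 2 else p x %% 2); split; last by rewrite eqxx.
  split.
  + by move=> x _; case: (x == r) => //; lia.
  + move=> x y Hx Hy Hxy.
    case: (eqVneq x r) => [Exr|Hxr]; case: (eqVneq y r) => [Eyr|Hyr].
    * by rewrite Exr Eyr Hirr in Hxy.
    * lia.
    * lia.
    * have px0 : p x <> 0 by move=> H; move/eqP: Hxr; apply; apply: pinj => //; rewrite pr.
      have py0 : p y <> 0 by move=> H; move/eqP: Hyr; apply; apply: pinj => //; rewrite pr.
      case: (edge x y Hx Hy Hxy); lia.
  + move=> x y z Hx Hy Hz.
    case: (eqVneq x r) => [Exr|Hxr]; case: (eqVneq y r) => [Eyr|Hyr]; try lia.
    by rewrite Exr Eyr eqxx.
- case: (boolP (odd n)) => Hodd.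
  + have Hm : n %% 2 = 1 by rewrite modn2 Hodd.
    have Hn5 : 5 <= n by lia.
    exists (fun x => g5 (p x)); split; last split.
    * split.
      -- move=> x _; case: (eqVneq (p x) 2) => [->//|/eqP H]; have := g5_lt H; lia.
      -- move=> x y Hx Hy Hxy.
         have Hxy' : x <> y by move=> E; rewrite E Hirr in Hxy.
         case: (eqVneq (p x) 2) => [Ex|/eqP Nx].
           rewrite Ex => /esym/g5_2 Ey; apply: Hxy'; apply: pinj => //; by rewrite Ex Ey.
         case: (eqVneq (p y) 2) => [Ey|/eqP Ny].
           rewrite Ey => /g5_2 Ex; by [].
         case: (edge x y Hx Hy Hxy) => Hc.
         ++ by apply: (g5_adj Hm Hn5 Nx Ny); left.
         ++ by move=> E; apply: (g5_adj Hm Hn5 Ny Nx _ (esym E)); left.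
         ++ by apply: (g5_adj Hm Hn5 Nx Ny); right.
         ++ by move=> E; apply: (g5_adj Hm Hn5 Ny Nx _ (esym E)); right.
      -- move=> x y z Hx Hy Hz /g5_2 Ex /g5_2 Ey /eqP Nxy.
         by exfalso; apply: Nxy; apply: pinj => //; rewrite Ex Ey.
    * by rewrite pr.
    * move=> z Hz Hrz; apply: g5_lt.
      have := plt z.
      by case: (edge r z HrB Hz Hrz); rewrite pr; lia.
  + have Hm : n %% 2 = 0 by rewrite modn2 (negbTE Hodd).
    exists (fun x => p x %% 2); split; last split.
    * split.
      -- move=> x _; lia.
      -- move=> x y Hx Hy Hxy.
         have := plt x; have := plt y; idtac.
         case: (edge x y Hx Hy Hxy); lia.
      -- move=> x y z _ _ _; lia.
    * rewrite pr; done.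
    * move=> z _ _; lia.
Qed.

Lemma two_elems (T : finType) (S : {set T}) r x y :
  #|S| <= 2 -> r \in S -> x \in S -> y \in S -> x != r -> y != r -> x = y.
Proof.
move=> Hc Hr Hx Hy Hxr Hyr.
have H1 : #|S :\ r| <= 1 by move: Hc; rewrite (cardsD1 r S) Hr.
move/card_le1_eqP: H1 => H; apply: H; by rewrite !inE ?Hxr ?Hyr ?Hx ?Hy.
Qed.

Lemma small_col (T : finType) (e : rel T) (S : {set T}) r :
  irreflexive e -> #|S| <= 2 -> r \in S -> T0 e S r /\ T2 e S r.
Proof.
move=> Hirr Hc Hr; split.
- exists (fun x => if x == r then 2 else 0); split; last by rewrite eqxx.
  split.
  + by move=> x _; case: (x == r).
  + move=> x y Hx Hy Hxy.
    case: (eqVneq x r) => [Exr|Hxr]; case: (eqVneq y r) => [Eyr|Hyr] // _.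
    * by rewrite Exr Eyr Hirr in Hxy.
    * by move: Hxy; rewrite (two_elems Hc Hr Hx Hy Hxr Hyr) Hirr.
  + move=> x y z Hx Hy Hz.
    case: (eqVneq x r) => [Exr|Hxr]; case: (eqVneq y r) => [Eyr|Hyr] //.
    by rewrite Exr Eyr eqxx.
- exists (fun x => if x == r then 0 else 1); split; last split.
  + split.
    * by move=> x _; case: (x == r).
    * move=> x y Hx Hy Hxy.
      case: (eqVneq x r) => [Exr|Hxr]; case: (eqVneq y r) => [Eyr|Hyr] // _.
      -- by rewrite Exr Eyr Hirr in Hxy.
      -- by move: Hxy; rewrite (two_elems Hc Hr Hx Hy Hxr Hyr) Hirr.
    * by move=> x y z _ _ _; case: (x == r).
  + by rewrite eqxx.
  + by move=> z _ _; case: (z == r).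
Qed.

Lemma good_sub (T : finType) (e : rel T) (S B : {set T}) f :
  good e B f -> S \subset B -> good e S f.
Proof.
move=> [H1 H2 H3] /subsetP sub; split.
- by move=> x /sub; apply: H1.
- by move=> x y /sub Hx /sub Hy; apply: H2.
- by move=> x y z /sub Hx /sub Hy /sub Hz; apply: H3.
Qed.

Definition swapc (c : nat) := if c == 2 then 2 else 1 - c.

Lemma good_swap (T : finType) (e : rel T) (S : {set T}) f :
  good e S f -> good e S (fun x => swapc (f x)).
Proof.
move=> [H1 H2 H3]; split.
- by move=> x _; rewrite /swapc; case: eqP => _; lia.
- move=> x y Hx Hy Hxy E; apply: (H2 x y Hx Hy Hxy).
  have := H1 x Hx; have := H1 y Hy; move: E; rewrite /swapc.
  case: eqP => A; case: eqP => B; lia.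
- move=> x y z Hx Hy Hz Ex Ey; apply: H3 => //.
  + move: Ex; have := H1 x Hx; rewrite /swapc; case: eqP => //; lia.
  + move: Ey; have := H1 y Hy; rewrite /swapc; case: eqP => //; lia.
Qed.

Lemma good_ex (T : finType) (e : rel T) (S : {set T}) :
  S = set0 -> exists f, good e S f.
Proof.
move=> ->; exists (fun _ => 0); split; by move=> x; rewrite inE.
Qed.

Definition crossfree (T : finType) (e : rel T) (S1 S2 : {set T}) :=
  forall a b, a \in S1 -> a \notin S2 -> b \in S2 -> b \notin S1 -> ~~ e a b.

Lemma edge_side (T : finType) (e : rel T) (S1 S2 : {set T}) a b :
  symmetric e -> crossfree e S1 S2 -> a \in S1 :|: S2 -> b \in S1 :|: S2 -> e a b ->
  (a \in S1 /\ b \in S1) \/ (a \in S2 /\ b \in S2).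
Proof.
move=> Hsym Hcf; rewrite !inE => Ha Hb Hab.
case: (boolP (a \in S1)) => a1; case: (boolP (b \in S1)) => b1; first by left.
- case: (boolP (a \in S2)) => a2; first by right; split => //; move: Hb; rewrite (negbTE b1).
  by move: Hb; rewrite (negbTE b1) /= => b2; move: (Hcf a b a1 a2 b2 b1); rewrite Hab.
- case: (boolP (b \in S2)) => b2; first by right; split => //; move: Ha; rewrite (negbTE a1).
  by move: Ha; rewrite (negbTE a1) /= => a2; move: (Hcf b a b1 b2 a2 a1); rewrite Hsym Hab.
- by right; move: Ha Hb; rewrite (negbTE a1) (negbTE b1).
Qed.

Lemma merge (T : finType) (e : rel T) (S1 S2 : {set T}) u f1 f2 :
  symmetric e -> crossfree e S1 S2 -> S1 :&: S2 \subset [set u] ->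
  good e S1 f1 -> good e S2 f2 ->
  (u \in S1 -> u \in S2 -> f1 u = f2 u /\
     (f1 u = 2 \/ forall w, w \in S2 -> e u w -> f2 w < 2)) ->
  good e (S1 :|: S2) (fun z => if z \in S1 then f1 z else f2 z).
Proof.
move=> Hsym Hcf /subsetP Hi [A1 B1 C1] [A2 B2 C2] Hc.
have isu : forall z, z \in S1 -> z \in S2 -> z = u.
  by move=> z z1 z2; apply/set1P; apply: Hi; rewrite inE z1 z2.
have F2 : forall z, z \in S2 -> (if z \in S1 then f1 z else f2 z) = f2 z.
  move=> z z2; case: ifP => // z1; have Ez := isu z z1 z2; subst z.
  by case: (Hc z1 z2).
have F1 : forall z, z \in S1 -> (if z \in S1 then f1 z else f2 z) = f1 z.
  by move=> z ->.
split.
- move=> x; rewrite inE => /orP[] Hx; first by rewrite F1 //; apply: A1.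
  by rewrite F2 //; apply: A2.
- move=> x y Hx Hy Hxy.
  case: (edge_side Hsym Hcf Hx Hy Hxy) => [[x1 y1]|[x2 y2]].
  + by rewrite !F1 //; apply: B1.
  + by rewrite !F2 //; apply: B2.
- move=> x y z Hx Hy Hz Ex Ey Nxy Hxz Hzy.
  case: (edge_side Hsym Hcf Hx Hz Hxz) => [[x1 z1]|[x2 z2]];
  case: (edge_side Hsym Hcf Hz Hy Hzy) => [[z1' y1]|[z2' y2]].
  + by rewrite !F1 // in Ex Ey; apply: (C1 x y z).
  + have Ez := isu z z1 z2'; subst z.
    rewrite F1 // in Ex; rewrite F2 // in Ey.
    case: (Hc z1 z2') => E [E2|E2].
    * by apply: (B1 x u x1 z1 Hxz); rewrite Ex E2.
    * by have := E2 y y2 Hzy; rewrite Ey.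
  + have Ez := isu z z1' z2; subst z.
    rewrite F2 // in Ex; rewrite F1 // in Ey.
    case: (Hc z1' z2) => E [E2|E2].
    * by apply: (B1 u y z1' y1 Hzy); rewrite Ey E2.
    * by have := E2 x x2; rewrite Hsym Hxz Ex => /(_ isT).
  + by rewrite !F2 // in Ex Ey; apply: (C2 x y z).
Qed.

Lemma step (T : finType) (e : rel T) (S1 S2 : {set T}) u r :
  symmetric e -> crossfree e S1 S2 -> S1 :&: S2 \subset [set u] ->
  (forall x, x \in S1 -> T0 e S1 x /\ T2 e S1 x) ->
  (forall x, x \in S2 -> T0 e S2 x /\ T2 e S2 x) ->
  r \in S1 -> T0 e (S1 :|: S2) r /\ T2 e (S1 :|: S2) r.
Proof.
move=> Hsym Hcf Hi IH1 IH2 Hr.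
have ext : forall f1, good e S1 f1 -> exists f2, good e S2 f2 /\
  (u \in S1 -> u \in S2 -> f1 u = f2 u /\
     (f1 u = 2 \/ forall w, w \in S2 -> e u w -> f2 w < 2)).
  move=> f1 G1.
  case: (boolP (u \in S2)) => u2; last first.
    case: (set_0Vmem S2) => [E|[x x2]].
    - by case: (good_ex e E) => f2 G2; exists f2; split => // _; rewrite E inE.
    - by case: (IH2 x x2) => [[f2 [G2 _]] _]; exists f2; split => // _; rewrite (negbTE u2).
  case: (boolP (u \in S1)) => u1; last first.
    by case: (IH2 u u2) => [[f2 [G2 _]] _]; exists f2; split.
  case: (eqVneq (f1 u) 2) => Hf1.
  - case: (IH2 u u2) => [[f2 [G2 E2]] _]; exists f2; split => // _ _.
    by split; [rewrite Hf1 E2 | left].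
  - have Hlt : f1 u < 2 by case: G1 => A1 _ _; have := A1 u u1; lia.
    case: (IH2 u u2) => _ [g [G2 [Eg Ng]]].
    case: (eqVneq (g u) (f1 u)) => Hgu.
    + exists g; split => // _ _; split => //; by right.
    + exists (fun x => swapc (g x)); split; first by apply: good_swap.
      move=> _ _; split.
      * rewrite /swapc; case: eqP => H; lia.
      * right => w w2 Huw; have := Ng w w2 Huw; rewrite /swapc; case: eqP => H; lia.
split.
- case: (IH1 r Hr) => [[f1 [G1 E1]] _].
  case: (ext f1 G1) => f2 [G2 Hc].
  exists (fun z => if z \in S1 then f1 z else f2 z); split.
  + exact: merge Hsym Hcf Hi G1 G2 Hc.
  + by rewrite Hr.
- case: (IH1 r Hr) => _ [f1 [G1 [E1 N1]]].
  case: (ext f1 G1) => f2 [G2 Hc].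
  exists (fun z => if z \in S1 then f1 z else f2 z); split; last split.
  + exact: merge Hsym Hcf Hi G1 G2 Hc.
  + by rewrite Hr.
  + move=> z Hz Hrz.
    have Hr' : r \in S1 :|: S2 by rewrite inE Hr.
    case: ifP => z1; first by apply: N1.
    case: (edge_side Hsym Hcf Hr' Hz Hrz) => [[_ z1']|[r2 z2]].
      by rewrite z1' in z1.
    have Eru : r = u by apply/set1P; move/subsetP: Hi; apply; rewrite inE Hr r2.
    subst r; case: (Hc Hr r2) => _ [E|E]; first by rewrite E in E1.
    by apply: E.
Qed.

Lemma none_block (T : finType) (e : rel T) (S : {set T}) :
  1 < #|S| -> nonseparable_on e S ->
  ~ (exists S' : {set T}, [/\ S \subset S', 1 < #|S'|, nonseparable_on e S' & S' <> S]) ->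
  is_block e S.
Proof.
move=> H1 Hns Hno; split => //; split => // S' sub c ns.
by apply: NNPP => ne; apply: Hno; exists S'.
Qed.

Lemma block_ext (T : finType) (e : rel T) (S : {set T}) :
  1 < #|S| -> nonseparable_on e S -> exists B : {set T}, S \subset B /\ is_block e B.
Proof.
have : #|~: S| <= #|~: S| by [].
move: {2}#|~: S| => n; elim: n S => [|n IH] S Hn H1 Hns;
  (case: (classic (exists S' : {set T}, [/\ S \subset S', 1 < #|S'|, nonseparable_on e S' & S' <> S]))
     => [[S' [sub c ns ne]]|Hno]); last 1 [by exists S; split => //; apply: none_block];
  last 2 [by exists S; split => //; apply: none_block].
- have Hp : ~: S' \proper ~: S.
    by rewrite properC properEneq sub andbT; apply/eqP => E; apply: ne.
  have := proper_card Hp; lia.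
- have Hp : ~: S' \proper ~: S.
    by rewrite properC properEneq sub andbT; apply/eqP => E; apply: ne.
  have := proper_card Hp => Hlt.
  have [B [sB bB]] := IH S' ltac:(lia) c ns.
  by exists B; split => //; apply: subset_trans sB.
Qed.

Definition sep (T : finType) (e : rel T) (S : {set T}) :=
  exists S1 S2 : {set T}, exists u, [/\ S1 :|: S2 = S, #|S1| < #|S|, #|S2| < #|S|,
     S1 :&: S2 \subset [set u] & crossfree e S1 S2].

Lemma mk_sep (T : finType) (e : rel T) (S W K : {set T}) v x y :
  K \subset W -> W \subset S -> S :\: W \subset [set v] ->
  (forall a b, a \in K -> b \in W -> e a b -> b \in K) ->
  x \in K -> y \in W -> y \notin K -> sep e S.
Proof.
move=> /subsetP KW /subsetP WS /subsetP SW Hcl Hx Hy Hny.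
exists (K :|: (S :\: W)), (S :\: K), v; split.
- apply/setP => z; rewrite !inE.
  case: (boolP (z \in K)) => zK; first by rewrite (WS _ (KW _ zK)).
  by case: (z \in S); case: (z \in W).
- apply: proper_card; apply/properP; split.
    apply/subsetP => z; rewrite !inE => /orP[/KW/WS //|/andP[]//].
  by exists y; [apply: WS | rewrite !inE (negbTE Hny) Hy].
- apply: proper_card; apply/properP; split.
    by apply/subsetP => z; rewrite !inE => /andP[].
  by exists x; [apply: WS; apply: KW | rewrite !inE Hx].
- apply/subsetP => z; rewrite !inE => /andP[/orP[->//|H] _].
  by have := SW z; rewrite !inE; apply.
- move=> a b; rewrite !inE => Ha Ha2 /andP[bK bS] Hb.
  have aK : a \in K.
    move: Ha Ha2; case: (boolP (a \in K)) => // _ /= /andP[_ aS]; by rewrite aS.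
  have bW : b \in W by move: Hb; rewrite (negbTE bK) bS andbT /=; by case: (b \in W).
  apply/negP => Hab; by move: (Hcl a b aK bW Hab); rewrite (negbTE bK).
Qed.

Lemma nosep_nonsep (T : finType) (e : rel T) (S : {set T}) r :
  r \in S -> ~ sep e S -> nonseparable_on e S.
Proof.
move=> Hr Hns.
have comp : forall (W : {set T}) v x y, W \subset S -> S :\: W \subset [set v] ->
    x \in W -> y \in W -> connect (induced_rel e W) x y.
  move=> W v x y WS SW Hx Hy; apply: NNPP => Hc; apply: Hns.
  apply: (@mk_sep T e S W [set z in W | connect (induced_rel e W) x z] v x y) => //.
  - by apply/subsetP => z; rewrite inE => /andP[].
  - move=> a b; rewrite !inE => /andP[aW ca] bW ab; rewrite bW /=.
    apply: connect_trans ca _; apply: connect1; by apply/and3P.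
  - by rewrite inE Hx connect0.
  - rewrite inE Hy /=; by apply/negP.
split; first split.
- by apply/set0Pn; exists r.
- move=> x y Hx Hy; apply: (comp S r) => //.
  by apply/subsetP => z; rewrite !inE andNb.
- move=> v Hv x y Hx Hy; apply: (comp (S :\ v) v) => //.
  + by apply/subsetP => z; rewrite !inE => /andP[_ ->].
  + apply/subsetP => z; rewrite !inE negb_and negbK; by case: (z == v); case: (z \in S).
Qed.

Lemma crossfree_sym (T : finType) (e : rel T) (S1 S2 : {set T}) :
  symmetric e -> crossfree e S1 S2 -> crossfree e S2 S1.
Proof. by move=> Hsym Hcf a b a2 a1 b1 b2; rewrite Hsym; apply: Hcf. Qed.

Lemma main_ind (T : finType) (e : rel T) :
  simple_graph e -> cactus e -> girth_ge4 e ->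
  forall n (S : {set T}), #|S| <= n -> forall r, r \in S -> T0 e S r /\ T2 e S r.
Proof.
move=> Hsim Hcac Hg; have [Hsym Hirr] := Hsim.
elim => [|n IH] S Hn r Hr.
  by move: Hn; rewrite leqn0 cards_eq0 => /eqP E; rewrite E inE in Hr.
case: (classic (sep e S)) => [[S1 [S2 [u [HU c1 c2 Hi Hcf]]]] | Hns].
- have IH1 : forall x, x \in S1 -> T0 e S1 x /\ T2 e S1 x.
    by move=> x Hx; apply: IH => //; lia.
  have IH2 : forall x, x \in S2 -> T0 e S2 x /\ T2 e S2 x.
    by move=> x Hx; apply: IH => //; lia.
  rewrite -HU in Hr *.
  case: (boolP (r \in S1)) => r1.
    exact: (step Hsym Hcf Hi IH1 IH2 r1).
  have r2 : r \in S2 by move: Hr; rewrite inE (negbTE r1).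
  rewrite setUC; rewrite setIC in Hi.
  exact: (step Hsym (crossfree_sym Hsym Hcf) Hi IH2 IH1 r2).
- case: (leqP #|S| 2) => Hc; first exact: small_col.
  have Hns' := nosep_nonsep Hr Hns.
  have [B [sB bB]] := block_ext (ltnW Hc) Hns'.
  case: (Hcac B bB) => [[x [y [_ [EB _]]]]|Hcyc].
    have := subset_leq_card sB; rewrite EB cards2; case: (x != y); lia.
  have HrB : r \in B by move/subsetP: sB; apply.
  case: (cycle_col Hsim Hg Hcyc HrB) => [[f [Gf Ef]] [g [Gg [Eg Ng]]]]; split.
  + by exists f; split => //; apply: good_sub Gf sB.
  + exists g; split; first by apply: good_sub Gg sB.
    split => // z Hz; apply: Ng; by move/subsetP: sB; apply.
Qed.

Theorem mainTheorem13 (T : finType) (e : rel T) :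
  simple_graph e -> cactus e -> girth_ge4 e -> ab_colorable e 2 1.
Proof.
move=> Hsim Hcac Hg.
have [f Gf] : exists f, good e [set: T] f.
  case: (set_0Vmem [set: T]) => [E|[r _]]; first exact: good_ex.
  case: (main_ind Hsim Hcac Hg (leqnn #|[set: T]|) (in_setT r)) => [[f [G _]] _].
  by exists f.
case: Gf => A B C.
have V : forall x, nat_of_ord (inord (f x) : 'I_(2 + 1)) = f x.
  by move=> x; rewrite inordK // ltnS A ?in_setT.
exists (fun x => inord (f x)) => i.
case: ifP => Hi.
- move=> x y; rewrite !inE => /eqP Ex /eqP Ey; apply/negP => Hxy.
  apply: (B x y (in_setT x) (in_setT y) Hxy).
  by rewrite -(V x) -(V y) Ex Ey.
- have Hi2 : nat_of_ord i = 2 by have := ltn_ord i; move: Hi; lia.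
  move=> x y; rewrite !inE => /eqP Ex /eqP Ey Nxy.
  have fx : f x = 2 by rewrite -V Ex.
  have fy : f y = 2 by rewrite -V Ey.
  split.
  + apply/negP => Hxy; apply: (B x y (in_setT x) (in_setT y) Hxy); by rewrite fx fy.
  + move=> z; apply/negP => /andP[xz zy].
    exact: (C x y z (in_setT x) (in_setT y) (in_setT z) fx fy Nxy xz zy).
Qed.
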